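(* Let $X=\{(u,v)\in\mathbb{R}^2:0<u<1,\ 0<v<1\}$ with the Euclidean topology $\tau$ and the coordinatewise partial order $\preceq$. Then: (i) $(X,\tau,\preceq)$ is a locally compact, order-connected Hausdorff topological lattice; (ii) the canonical map $x\mapsto x^\downarrow$ topologically order-embeds $(X,\tau,\preceq)$ in $(C(X),\tau_F,\subseteq)$; (iii) the map $x\mapsto x^\downarrow$ from $(X,\tau)$ to $(C^\downarrow(X),\tau_V)$ is discontinuous at every point of $X$.
   Context: A partially ordered topological space is a topological space with a partial order whose graph is closed in the product; a topological lattice is one in which all binary meets and joins exist and $\wedge,\vee:X\times X\to X$ are continuous. $x^\downarrow=\{u\in X:u\preceq x\}$, $x^\uparrow=\{u\in X:x\preceq u\}$; order-connected means $x^\uparrow\cap y^\downarrow$ is connected whenever $x\preceq y$. $C(X)$ = closed subsets of $X$, $C^\downarrow(X)=\{x^\downarrow:x\in X\}$. Fell topology $\tau_F$: generated by $\{A:A\cap O\neq\emptyset\}$ ($O$ open) and $\{A:A\cap D=\emptyset\}$ ($D$ compact). Vietoris topology $\tau_V$: generated by $\{A:A\cap O\neq\emptyset\}$ ($O$ open) and $\{A:A\cap E=\emptyset\}$ ($E$ closed). ''Topologically order-embeds'': $x\preceq y\iff x^\downarrow\subseteq y^\downarrow$ and $x\mapsto x^\downarrow$ is a homeomorphism onto $C^\downarrow(X)$ with the relative Fell topology. *)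

(* Defs.v *)
From HB Require Import structures.
From mathcomp Require Import all_boot all_order all_algebra.
From mathcomp Require Import all_classical all_reals all_analysis.
Set Implicit Arguments. Unset Strict Implicit. Unset Printing Implicit Defensive.
Import Order.TTheory GRing.Theory Num.Theory.
Import numFieldNormedType.Exports.
Local Open Scope classical_set_scope.
Local Open Scope ring_scope.

Section PoTop.
Context {T : topologicalType} (le : T -> T -> Prop).

Definition down_set (x : T) : set T := [set u | le u x].
Definition up_set (x : T) : set T := [set u | le x u].

Definition po_top_space : Prop :=
  [/\ (forall x, le x x),
      (forall x y, le x y -> le y x -> x = y),
      (forall x y z, le x y -> le y z -> le x z) &
      closed [set p : T * T | le p.1 p.2]].

Definition is_glb (x y m : T) : Prop :=
  le m x /\ le m y /\ forall z, le z x -> le z y -> le z m.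
Definition is_lub (x y j : T) : Prop :=
  le x j /\ le y j /\ forall z, le x z -> le y z -> le j z.

Definition topological_lattice : Prop :=
  po_top_space /\
  exists (meet join : T -> T -> T),
    [/\ (forall x y, is_glb x y (meet x y)),
        (forall x y, is_lub x y (join x y)),
        continuous (fun p : T * T => meet p.1 p.2) &
        continuous (fun p : T * T => join p.1 p.2)].

Definition order_connected : Prop :=
  forall x y, le x y -> connected (up_set x `&` down_set y).

Definition closed_sets : set (set T) := [set A | closed A].
Definition down_closed_sets : set (set T) := [set A | exists x, A = down_set x].
End PoTop.

Definition gen_open {U : Type} (S : set (set U)) (W : set U) : Prop :=
  forall a, W a -> exists (n : nat) (B : 'I_n -> set U),
    [/\ (forall i, S (B i)), (forall i, B i a) &
        (forall c, (forall i, B i c) -> W c)].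

Section Hyper.
Context {T : topologicalType}.
Definition fell_subbasis : set (set (set T)) :=
  [set W | (exists O, open O /\ W = [set A | A `&` O !=set0])
        \/ (exists D, compact D /\ W = [set A | A `&` D = set0])].
Definition vietoris_subbasis : set (set (set T)) :=
  [set W | (exists O, open O /\ W = [set A | A `&` O !=set0])
        \/ (exists E, closed E /\ W = [set A | A `&` E = set0])].
Definition fell_open := gen_open fell_subbasis.
Definition vietoris_open := gen_open vietoris_subbasis.
End Hyper.

(* f : T -> set T is a homeomorphism from T onto its image (= range f)
   equipped with the relative topology induced by the topology with open
   sets [hopen]. *)
Definition homeo_onto_range {T : topologicalType} (hopen : set (set (set T)))
  (f : T -> set T) : Prop :=
  [/\ injective f,
      (forall W, hopen W -> open (f @^-1` W)) &
      (forall U, open U -> exists W, hopen W /\ f @` U = W `&` range f)].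

(* continuity at a point of f : T -> set T into the relative topology of
   a subset C containing range f *)
Definition continuous_at_into {T : topologicalType} (hopen : set (set (set T)))
  (f : T -> set T) (x : T) : Prop :=
  forall W, hopen W -> W (f x) -> nbhs x (f @^-1` W).

Definition open_square (R : realType) : set (R * R)%type :=
  [set p | 0 < p.1 < 1 /\ 0 < p.2 < 1].

Definition Xsq (R : realType) : topologicalType := (set_type (@open_square R) : topologicalType).

Definition sq_le (R : realType) (x y : Xsq R) : Prop :=
  ((set_val x).1 <= (set_val y).1) /\ ((set_val x).2 <= (set_val y).2).

(* Main.v *)
Require Import Defs.
From HB Require Import structures.
From mathcomp Require Import all_boot all_order all_algebra.
From mathcomp Require Import all_classical all_reals all_analysis.
From mathcomp Require Import lra.
Import Order.TTheory GRing.Theory Num.Theory.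
Import numFieldNormedType.Exports.
Local Open Scope classical_set_scope.
Local Open Scope ring_scope.
Ltac mm := repeat match goal with
  | |- context [Order.min ?a ?b] => case: (leP a b) => ?
  | |- context [Order.max ?a ?b] => case: (leP a b) => ?
  end.
Section S.
Variable R : realType.
Implicit Types x y z : Xsq R.

Definition c1 (x : Xsq R) : R := (set_val x).1.
Definition c2 (x : Xsq R) : R := (set_val x).2.

Lemma ballR (a b e : R) : ball a e b <-> a - e < b < a + e.
Proof. by rewrite /ball /= ltr_distlC. Qed.

Lemma ballX x y e : ball x e y <-> (c1 x - e < c1 y < c1 x + e) /\ (c2 x - e < c2 y < c2 x + e).
Proof. by rewrite -!ballR. Qed.

Lemma c_in x : 0 < c1 x < 1 /\ 0 < c2 x < 1.
Proof. case: x => p hp; rewrite /c1 /c2 /=. have := set_mem hp. exact. Qed.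

Lemma Xeq x y : c1 x = c1 y -> c2 x = c2 y -> x = y.
Proof.
case: x => [[a b] hx]; case: y => [[a' b'] hy]; rewrite /c1 /c2 /= => h1 h2.
by apply: val_inj => /=; rewrite h1 h2.
Qed.

Lemma open_crit (T : pseudoMetricType R) (A : set T) :
  (forall p, A p -> exists2 e, 0 < e & ball p e `<=` A) -> open A.
Proof.
move=> h; rewrite openE => p /h [e e0 sA]; apply/nbhs_ballP; by exists e.
Qed.

Lemma closed_crit (T : pseudoMetricType R) (A : set T) :
  (forall p, ~ A p -> exists2 e, 0 < e & forall q, ball p e q -> ~ A q) -> closed A.
Proof.
move=> h p clp; apply: contrapT => /h [e e0 nA].
have [q [Aq bq]] := clp _ (nbhsx_ballx p _ e0).
exact: (nA q).
Qed.

Lemma cont_crit (T U : pseudoMetricType R) (f : T -> U) :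
  (forall p e, 0 < e -> exists2 d, 0 < d & forall q, ball p d q -> ball (f p) e (f q)) ->
  continuous f.
Proof.
move=> h p A /nbhs_ballP [e e0 sA]; apply/nbhs_ballP.
have [d d0 hd] := h p e e0; exists d => // q /hd; exact: sA.
Qed.

Lemma nbhsX x (U : set (Xsq R)) : nbhs x U ->
  exists2 e, 0 < e & forall y, c1 x - e < c1 y < c1 x + e -> c2 x - e < c2 y < c2 x + e -> U y.
Proof.
move=> /nbhs_ballP [e e0 sU]; exists e => // y h1 h2; apply: sU; exact/ballX.
Qed.

Lemma min_lip (a b a' b' e : R) : a - e < a' < a + e -> b - e < b' < b + e ->
  Num.min a b - e < Num.min a' b' < Num.min a b + e.
Proof.
move=> /andP[h1 h2] /andP[h3 h4].
mm; apply/andP; split; lra.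
Qed.

Lemma max_lip (a b a' b' e : R) : a - e < a' < a + e -> b - e < b' < b + e ->
  Num.max a b - e < Num.max a' b' < Num.max a b + e.
Proof.
move=> /andP[h1 h2] /andP[h3 h4].
mm; apply/andP; split; lra.
Qed.

Definition mkX (p : R * R) (h : open_square p) : Xsq R :=
  exist (fun q => q \in open_square (R:=R)) p (mem_set h).

Lemma mkX1 p h : c1 (@mkX p h) = p.1. Proof. by []. Qed.
Lemma mkX2 p h : c2 (@mkX p h) = p.2. Proof. by []. Qed.

Lemma min01 (a b : R) : 0 < a < 1 -> 0 < b < 1 -> 0 < Num.min a b < 1.
Proof. move=> /andP[? ?] /andP[? ?]; mm; apply/andP; split; lra. Qed.
Lemma max01 (a b : R) : 0 < a < 1 -> 0 < b < 1 -> 0 < Num.max a b < 1.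
Proof. move=> /andP[? ?] /andP[? ?]; mm; apply/andP; split; lra. Qed.

Definition clamp (lo hi t : R) := Num.max lo (Num.min hi t).

Lemma clamp01 (lo hi t : R) : 0 < lo < 1 -> 0 < hi < 1 -> 0 < clamp lo hi t < 1.
Proof.
move=> /andP[? ?] /andP[? ?]; rewrite /clamp.
mm; apply/andP; split; lra.
Qed.

Lemma clamp_id (lo hi t : R) : lo <= t <= hi -> clamp lo hi t = t.
Proof.
move=> /andP[? ?]; rewrite /clamp.
mm; lra.
Qed.

Lemma clamp_bnd (t lo hi : R) : lo <= hi -> lo <= clamp lo hi t <= hi.
Proof.
move=> ?; rewrite /clamp.
mm; apply/andP; split; lra.
Qed.

Lemma clamp_lip (lo hi t s e : R) : 0 < e -> t - e < s < t + e ->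
  clamp lo hi t - e < clamp lo hi s < clamp lo hi t + e.
Proof.
move=> e0 h; apply: max_lip; first by apply/andP; split; lra.
apply: min_lip => //; apply/andP; split; lra.
Qed.

Definition clampX (a b : Xsq R) (p : R * R) : Xsq R.
refine (@mkX (clamp (c1 a) (c1 b) p.1, clamp (c2 a) (c2 b) p.2) _).
have [h1 h2] := c_in a; have [h3 h4] := c_in b.
by split; apply: clamp01.
Defined.

Lemma clampX1 a b p : c1 (clampX a b p) = clamp (c1 a) (c1 b) p.1. Proof. by []. Qed.
Lemma clampX2 a b p : c2 (clampX a b p) = clamp (c2 a) (c2 b) p.2. Proof. by []. Qed.

Lemma clampX_id a b y : sq_le a y -> sq_le y b -> clampX a b (set_val y) = y.
Proof.
move=> [h1 h2] [h3 h4]; apply: Xeq; rewrite ?clampX1 ?clampX2 clamp_id //; by apply/andP.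
Qed.

Lemma clampX_id' a b y : sq_le a y -> sq_le y b -> clampX a b (c1 y, c2 y) = y.
Proof. by rewrite /c1 /c2 -surjective_pairing; exact: clampX_id. Qed.

Lemma clampX_bnd a b p : sq_le a b -> sq_le a (clampX a b p) /\ sq_le (clampX a b p) b.
Proof.
move=> [h1 h2].
have /andP[? ?] := clamp_bnd p.1 _ _ h1; have /andP[? ?] := clamp_bnd p.2 _ _ h2.
by split; split.
Qed.

Lemma clampX_cont a b : continuous (clampX a b).
Proof.
apply: cont_crit => p e e0; exists e => // q [/ballR h1 /ballR h2].
apply/ballX; rewrite !clampX1 !clampX2; split; exact: clamp_lip.
Qed.

Definition meetX (x y : Xsq R) : Xsq R.
refine (@mkX (Num.min (c1 x) (c1 y), Num.min (c2 x) (c2 y)) _).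
have [h1 h2] := c_in x; have [h3 h4] := c_in y.
by split; apply: min01.
Defined.
Definition joinX (x y : Xsq R) : Xsq R.
refine (@mkX (Num.max (c1 x) (c1 y), Num.max (c2 x) (c2 y)) _).
have [h1 h2] := c_in x; have [h3 h4] := c_in y.
by split; apply: max01.
Defined.

Lemma meetX_cont : continuous (fun p : Xsq R * Xsq R => meetX p.1 p.2).
Proof.
apply: cont_crit => p e e0; exists e => // q [/ballX [h1 h2] /ballX [h3 h4]].
apply/ballX; split; exact: min_lip.
Qed.
Lemma joinX_cont : continuous (fun p : Xsq R * Xsq R => joinX p.1 p.2).
Proof.
apply: cont_crit => p e e0; exists e => // q [/ballX [h1 h2] /ballX [h3 h4]].
apply/ballX; split; exact: max_lip.
Qed.

Lemma po_sq : po_top_space (@sq_le R).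
Proof.
split.
- by move=> x; split.
- move=> x y [h1 h2] [h3 h4]; apply: Xeq; apply/eqP; rewrite eq_le; apply/andP; split; assumption.
- move=> x y z [h1 h2] [h3 h4]; split; [exact: le_trans h1 h3|exact: le_trans h2 h4].
- apply: closed_crit => -[x y] /= hn.
  have : ~ (c1 x <= c1 y) \/ ~ (c2 x <= c2 y).
    by apply: contrapT => /not_orP [/contrapT ? /contrapT ?]; apply: hn.
  case=> /negP; rewrite -ltNge => lt.
  + exists ((c1 x - c1 y) / 2); first lra.
    move=> [x' y'] [/ballX [/andP[? ?] _] /ballX [/andP[? ?] _]] [/= ? _]; lra.
  + exists ((c2 x - c2 y) / 2); first lra.
    move=> [x' y'] [/ballX [_ /andP[? ?]] /ballX [_ /andP[? ?]]] [/= _ ?]; lra.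
Qed.

Lemma lattice_sq : topological_lattice (@sq_le R).
Proof.
split; first exact: po_sq.
exists meetX, joinX; split.
- move=> x y; split; [|split].
  + by split; rewrite /= ge_min lexx.
  + by split; rewrite /= ge_min lexx orbT.
  + by move=> z [? ?] [? ?]; split; rewrite /= le_min; apply/andP.
- move=> x y; split; [|split].
  + by split; rewrite /= le_max lexx.
  + by split; rewrite /= le_max lexx orbT.
  + by move=> z [? ?] [? ?]; split; rewrite /= ge_max; apply/andP.
- exact: meetX_cont.
- exact: joinX_cont.
Qed.

Lemma close_eq (a b : R) : (forall e, 0 < e -> a < b + e /\ b < a + e) -> a = b.
Proof.
move=> h; apply/eqP; rewrite eq_le; apply/andP; split; rewrite leNgt; apply/negP => lt.
- have [h1 h2] := h ((a - b) / 2) ltac:(lra); lra.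
- have [h1 h2] := h ((b - a) / 2) ltac:(lra); lra.
Qed.

Lemma haus_sq : hausdorff_space (Xsq R).
Proof.
move=> p q cl.
have key e : 0 < e -> (c1 p < c1 q + 2 * e /\ c1 q < c1 p + 2 * e) /\
                      (c2 p < c2 q + 2 * e /\ c2 q < c2 p + 2 * e).
  move=> e0; have [z [/ballX [/andP[? ?] /andP[? ?]] /ballX [/andP[? ?] /andP[? ?]]]] :=
    cl _ _ (nbhsx_ballx p _ e0) (nbhsx_ballx q _ e0).
  by split; split; lra.
apply: Xeq; apply: close_eq => e e0; have := key (e / 2) ltac:(lra); case=> -[? ?] [? ?]; split; lra.
Qed.

Lemma ballR_ball (a b e : R) : a - e < b < a + e -> ball a e b.
Proof. by move/ballR. Qed.

Lemma pair_cont1 (c : R) : continuous (fun s : R => (s, c)).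
Proof.
apply: cont_crit => p e e0; exists e => // q bq; split => //=; exact: ballxx.
Qed.
Lemma pair_cont2 (c : R) : continuous (fun s : R => (c, s)).
Proof.
apply: cont_crit => p e e0; exists e => // q bq; split => //=; exact: ballxx.
Qed.

Lemma itvP (a b t : R) : `[a, b]%classic t <-> a <= t <= b.
Proof. by rewrite /= in_itv. Qed.

Lemma loc_compact_sq : locally_compact [set: Xsq R].
Proof.
move=> x _; have [/andP[a0 a1] /andP[b0 b1]] := c_in x.
have [m1 [? [? ?]]] : exists m, 0 < m /\ m <= c1 x /\ m <= 1 - c1 x.
  by exists (Num.min (c1 x) (1 - c1 x)); mm; repeat split; lra.
have [m2 [? [? ?]]] : exists m, 0 < m /\ m <= c2 x /\ m <= 1 - c2 x.
  by exists (Num.min (c2 x) (1 - c2 x)); mm; repeat split; lra.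
have [d [d0 [da [da' [db db']]]]] : exists d, 0 < d /\ d < c1 x /\ d < 1 - c1 x /\ d < c2 x /\ d < 1 - c2 x.
  by exists (Num.min m1 m2 / 2); mm; repeat split; lra.
have hlo : open_square (c1 x - d, c2 x - d) by split; apply/andP; split => /=; lra.
have hhi : open_square (c1 x + d, c2 x + d) by split; apply/andP; split => /=; lra.
set lo := @mkX _ hlo; set hi := @mkX _ hhi.
have h := @continuous_compact _ (Xsq R) (clampX lo hi) (`[c1 x - d, c1 x + d] `*` `[c2 x - d, c2 x + d]).
exists (clampX lo hi @` (`[c1 x - d, c1 x + d] `*` `[c2 x - d, c2 x + d])); last split.
- apply: filterS (nbhsx_ballx x _ d0) => y /ballX [/andP[? ?] /andP[? ?]] _.
  exists (set_val y); first by split; apply/itvP; apply/andP; split; lra.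
  by apply: clampX_id; split => /=; rewrite /lo /hi ?mkX1 ?mkX2 /=; lra.
- apply: h; first exact: continuous_subspaceT (clampX_cont lo hi).
  by apply: compact_setX; exact: segment_compact.
- apply: compact_closed; first exact: haus_sq.
  apply: h; first exact: continuous_subspaceT (clampX_cont lo hi).
  by apply: compact_setX; exact: segment_compact.
Qed.

Lemma ord_conn_sq : order_connected (@sq_le R).
Proof.
move=> x y [hxy1 hxy2].
set H := (fun s => clampX x y (s, c2 x)) @` `[c1 x, c1 y].
set V := fun t => (fun s => clampX x y (t, s)) @` `[c2 x, c2 y].
have cH : connected H.
  apply: connected_continuous_connected; first exact: segment_connected.
  apply: continuous_subspaceT => s.
  exact: (continuous_comp (pair_cont1 (c2 x) s) (clampX_cont x y _)).
have cV t : connected (V t).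
  apply: connected_continuous_connected; first exact: segment_connected.
  apply: continuous_subspaceT => s.
  exact: (continuous_comp (pair_cont2 t s) (clampX_cont x y _)).
have -> : up_set (@sq_le R) x `&` down_set (@sq_le R) y =
    \bigcup_(t in `[c1 x, c1 y]%classic) (H `|` V t).
  rewrite eqEsubset; split.
  - move=> z [[h1 h2] [h3 h4]]; exists (c1 z); first by apply/itvP; apply/andP.
    right; exists (c2 z); first by apply/itvP; apply/andP.
    by apply: clampX_id'; split.
  - by move=> z [t _ [[s _ <-]|[s _ <-]]]; apply: clampX_bnd.
apply: bigcup_connected.
  exists x => t ht; left; exists (c1 x); first by apply/itvP; rewrite lexx.
  by apply: clampX_id'; split; rewrite ?lexx.
move=> t ht; apply: connectedU => //.
exists (clampX x y (t, c2 x)); split.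
  by exists t.
by exists (c2 x) => //; apply/itvP; rewrite lexx.
Qed.

Notation dn := (down_set (@sq_le R)).

Lemma le_close (a b : R) : (forall e, 0 < e -> a < b + e) -> a <= b.
Proof. move=> h; rewrite leNgt; apply/negP => lt; have := h ((a - b)/2) ltac:(lra); lra. Qed.

Lemma closed_dn x : closed (dn x).
Proof.
apply: closed_crit => p hn.
have : ~ (c1 p <= c1 x) \/ ~ (c2 p <= c2 x).
  by apply: contrapT => /not_orP [/contrapT ? /contrapT ?]; apply: hn.
case=> /negP; rewrite -ltNge => lt.
+ exists ((c1 p - c1 x) / 2); first lra.
  move=> q /ballX [/andP[? ?] _] [? _]; lra.
+ exists ((c2 p - c2 x) / 2); first lra.
  move=> q /ballX [_ /andP[? ?]] [_ ?]; lra.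
Qed.

Lemma dn_sub x y : sq_le x y <-> dn x `<=` dn y.
Proof.
split.
- move=> [h1 h2] z [h3 h4]; split; [exact: le_trans h3 h1|exact: le_trans h4 h2].
- by move=> h; apply: h; split.
Qed.

Lemma dn_open_nbhs x (O : set (Xsq R)) : open O -> (dn x `&` O !=set0) ->
  nbhs x (fun y => dn y `&` O !=set0).
Proof.
move=> oO [z [[zx1 zx2] Oz]].
have := oO; rewrite openE => /(_ z Oz) /nbhsX [e e0 hO].
have [/andP[? ?] /andP[? ?]] := c_in z.
have [m1 [? [? ?]]] : exists m, 0 < m /\ m <= c1 z /\ m <= c2 z.
  by exists (Num.min (c1 z) (c2 z)); mm; repeat split; lra.
have [m [? [? [? ?]]]] : exists m, 0 < m /\ m < e /\ m < c1 z /\ m < c2 z.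
  by exists (Num.min e m1 / 2); mm; repeat split; lra.
have hz' : open_square (c1 z - m, c2 z - m) by split; apply/andP; split => /=; lra.
apply/nbhs_ballP; exists m => // y /ballX [/andP[? ?] /andP[? ?]].
exists (@mkX _ hz'); split.
- by split => /=; lra.
- by apply: hO; rewrite ?mkX1 ?mkX2 /=; apply/andP; split; lra.
Qed.

Lemma dn_compact_nbhs x (D : set (Xsq R)) : compact D -> dn x `&` D = set0 ->
  nbhs x (fun y => dn y `&` D = set0).
Proof.
move=> cD hx; apply: contrapT => hn.
have ex e : 0 < e -> exists d, D d /\ c1 d < c1 x + e /\ c2 d < c2 x + e.
  move=> e0; apply: contrapT => hne; apply: hn; apply/nbhs_ballP; exists e => // y /ballX [/andP[? ?] /andP[? ?]].
  rewrite -subset0 => d [[? ?] Dd]; apply: hne; exists d; split => //; split; lra.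
pose Ds := fun e => [set d | D d /\ c1 d < c1 x + e /\ c2 d < c2 x + e].
have FF : ProperFilter (filter_from [set e : R | 0 < e] Ds).
  apply: filter_from_proper; last by move=> e /ex [d hd]; exists d.
  apply: filter_from_filter; first by exists 1; rewrite /= ltr01.
  move=> i j /= i0 j0; exists (Num.min i j); first by rewrite /= lt_min i0 j0.
  have [? ?] : Num.min i j <= i /\ Num.min i j <= j by mm; split; lra.
  by move=> d [Dd [h1 h2]]; split; split => //; split; lra.
have FD : filter_from [set e : R | 0 < e] Ds D by exists 1; [exact: ltr01 | move=> d []].
have [d [Dd cl]] := cD _ FF FD.
have key e : 0 < e -> c1 d < c1 x + 2 * e /\ c2 d < c2 x + 2 * e.
  move=> e0; have FDe : filter_from [set e : R | 0 < e] Ds (Ds e) by exists e.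
  have [d' [[_ [? ?]] /ballX [/andP[? ?] /andP[? ?]]]] :=
    cl (Ds e) (ball d e) FDe (nbhsx_ballx d _ e0).
  by split; lra.
have dx : dn x d.
  by split; apply: le_close => e e0; have [? ?] := key (e / 2) ltac:(lra); lra.
have : (dn x `&` D) d by [].
by rewrite hx.
Qed.

Lemma sub_nbhs (S : set (set (Xsq R))) x : fell_subbasis S -> S (dn x) ->
  nbhs x (fun y => S (dn y)).
Proof.
case=> [[V1 [oO ->]]|[D1 [cD ->]]].
- exact: dn_open_nbhs.
- exact: dn_compact_nbhs.
Qed.

Lemma preim_fell (W : set (set (Xsq R))) : fell_open W -> open (dn @^-1` W).
Proof.
move=> hW; rewrite openE => x Wx.
have [n [B [hS hB hBW]]] := hW _ Wx.
have h := @filter_forall _ _ (fun i y => B i (dn y)) (nbhs x) (nbhs_filter x) (fun i => @sub_nbhs (B i) x (hS i) (hB i)).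
by apply: filterS h => y hy; exact: hBW.
Qed.

Lemma img_fell (U : set (Xsq R)) : open U ->
  exists W, fell_open W /\ dn @` U = W `&` range dn.
Proof.
move=> oU.
pose W := fun A => exists n (B : 'I_n -> set (set (Xsq R))),
  [/\ forall i, fell_subbasis (B i), forall i, B i A &
      forall c, (forall i, B i c) -> range dn c -> (dn @` U) c].
exists W; split.
  move=> A [n [B [h1 h2 h3]]]; exists n, B; split => // c hc; exists n, B; by split.
rewrite eqEsubset; split; last by move=> A [[n [B [_ hA h3]]] hr]; exact: h3.
move=> A [x Ux <-]; split; last by exists x.
have := oU; rewrite openE => /(_ x Ux) /nbhsX [e e0 hU].
have [/andP[? ?] /andP[? ?]] := c_in x.
have [m1 [? [? ?]]] : exists m, 0 < m /\ m <= c1 x /\ m <= 1 - c1 x.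
  by exists (Num.min (c1 x) (1 - c1 x)); mm; repeat split; lra.
have [m2 [? [? ?]]] : exists m, 0 < m /\ m <= c2 x /\ m <= 1 - c2 x.
  by exists (Num.min (c2 x) (1 - c2 x)); mm; repeat split; lra.
have [m3 [? [? ?]]] : exists m, 0 < m /\ m <= m1 /\ m <= m2.
  by exists (Num.min m1 m2); mm; repeat split; lra.
have [d [d0 [de [da [da' [db db']]]]]] : exists d, 0 < d /\ d < e /\ d < c1 x /\ d < 1 - c1 x /\ d < c2 x /\ d < 1 - c2 x.
  by exists (Num.min e m3 / 2); mm; repeat split; lra.
have hp1 : open_square (c1 x + d, c2 x - d) by split; apply/andP; split => /=; lra.
have hp2 : open_square (c1 x - d, c2 x + d) by split; apply/andP; split => /=; lra.
set P1 := @mkX _ hp1; set P2 := @mkX _ hp2.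
pose O := [set z : Xsq R | c1 x - d < c1 z /\ c2 x - d < c2 z].
have oO : open O.
  apply: open_crit => z [h1 h2].
  have [r [? [? ?]]] : exists r, 0 < r /\ r <= c1 z - (c1 x - d) /\ r <= c2 z - (c2 x - d).
    by exists (Num.min (c1 z - (c1 x - d)) (c2 z - (c2 x - d))); mm; repeat split; lra.
  by exists r => // w /ballX [/andP[? ?] /andP[? ?]]; split; lra.
pose B := fun i : 'I_3 => if val i == 0%N then [set A : set (Xsq R) | A `&` O !=set0]
  else if val i == 1%N then [set A : set (Xsq R) | A `&` [set P1] = set0]
  else [set A : set (Xsq R) | A `&` [set P2] = set0].
exists 3%N, B; split.
- move=> i; rewrite /B; case: ifP => _.
    by left; exists O.
  case: ifP => _; right; [exists [set P1] | exists [set P2]]; split => //; exact: compact_set1.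
- move=> i; rewrite /B; case: ifP => _; [|case: ifP => _].
  + by exists x; split; [split | split; lra].
  + rewrite /= -subset0 => z [[h1 h2] zP]; move: h1; rewrite zP /P1 => h; exfalso; have : c1 x + d <= c1 x := h; lra.
  + rewrite /= -subset0 => z [[h1 h2] zP]; move: h2; rewrite zP /P2 => h; exfalso; have : c2 x + d <= c2 x := h; lra.
- move=> c hc [y _ yc]; rewrite -yc in hc; exists y => //.
  have := hc (@Ordinal 3 0 erefl); rewrite /B /= => -[z [[zy1 zy2] [Oz1 Oz2]]].
  have := hc (@Ordinal 3 1 erefl); rewrite /B /= => H1.
  have := hc (@Ordinal 3 2 erefl); rewrite /B /= => H2.
  have y1 : c1 y < c1 x + d.
    rewrite ltNge; apply/negP => h.
    have : (dn y `&` [set P1]) P1 by split => //; split; rewrite /P1 ?mkX1 ?mkX2 /=; lra.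
    by rewrite H1.
  have y2 : c2 y < c2 x + d.
    rewrite ltNge; apply/negP => h.
    have : (dn y `&` [set P2]) P2 by split => //; split; rewrite /P2 ?mkX1 ?mkX2 /=; lra.
    by rewrite H2.
  by apply: hU; apply/andP; split; lra.
Qed.

Lemma homeo_sq : homeo_onto_range fell_open dn.
Proof.
split.
- move=> x y h; case: po_sq => _ anti _ _; apply: anti; apply/dn_sub; rewrite h //.
- exact: preim_fell.
- exact: img_fell.
Qed.

Lemma discont_sq x : ~ continuous_at_into vietoris_open dn x.
Proof.
move=> hc.
pose E := [set z : Xsq R | c1 x + c2 z <= c1 z].
have cE : closed E.
  apply: closed_crit => p /negP; rewrite -ltNge => lt.
  exists ((c1 x + c2 p - c1 p) / 3); first lra.
  move=> q /ballX [/andP[? ?] /andP[? ?]] /= hq; rewrite /E /= in hq; lra.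
pose W := [set A : set (Xsq R) | A `&` E = set0].
have oW : vietoris_open W.
  move=> A WA; exists 1%N, (fun _ => W); split => //.
  - by move=> _; right; exists E.
  - by move=> c /(_ ord0).
have Wx : W (dn x).
  rewrite /W /= -subset0 => z [[h1 h2] hE]; have [/andP[? ?] _] := c_in z.
  rewrite /E /= in hE; have [_ /andP[? ?]] := c_in z; lra.
have /nbhsX [e e0 hU] := hc W oW Wx.
have [/andP[? ?] /andP[? ?]] := c_in x.
have [r [? [? ?]]] : exists r, 0 < r /\ r < e /\ r < 1 - c1 x.
  by exists (Num.min e (1 - c1 x) / 2); mm; repeat split; lra.
have [m [? [? ?]]] : exists m, 0 < m /\ m <= r /\ m <= c2 x.
  by exists (Num.min r (c2 x)); mm; repeat split; lra.
have hy : open_square (c1 x + r, c2 x) by split; apply/andP; split => /=; lra.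
have hz : open_square (c1 x + r, m) by split; apply/andP; split => /=; lra.
have := hU (@mkX _ hy); rewrite ?mkX1 ?mkX2 /=.
move=> /(_ ltac:(apply/andP; split; lra) ltac:(apply/andP; split; lra)) H.
have : (dn (@mkX _ hy) `&` E) (@mkX _ hz).
  split; [have : c1 x + r <= c1 x + r /\ m <= c2 x by split; lra | have : c1 x + m <= c1 x + r by lra]; exact.
by rewrite H.
Qed.
End S.

Theorem mainTheorem10 (R : realType) :
  (* (i) *)
  [/\ locally_compact [set: Xsq R],
      order_connected (@sq_le R),
      hausdorff_space (Xsq R) &
      topological_lattice (@sq_le R)]
  /\
  (* (ii) *)
  ((forall x : Xsq R, closed_sets (down_set (@sq_le R) x)) /\
   (forall x y : Xsq R, sq_le x y <-> down_set (@sq_le R) x `<=` down_set (@sq_le R) y) /\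
   homeo_onto_range fell_open (down_set (@sq_le R)))
  /\
  (* (iii) *)
  (forall x : Xsq R, ~ continuous_at_into vietoris_open (down_set (@sq_le R)) x).
Proof.
split; first split.
- exact: loc_compact_sq.
- exact: ord_conn_sq.
- exact: haus_sq.
- exact: lattice_sq.
split; first split.
- exact: closed_dn.
- split; [exact: dn_sub | exact: homeo_sq].
- exact: discont_sq.
Qed.
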